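(* Let $n\geq 3$. The center of the ramified symmetric monoid $\mathcal{R}(\mathfrak{S}_n)$ is $Z(\mathcal{R}(\mathfrak{S}_n))=\{1,\;e_1e_2\cdots e_{n-1}\}$, i.e. the submonoid generated by the single idempotent $e_1e_2\cdots e_{n-1}$.
   Context: For $n\ge1$ let $\mathfrak{C}_n$ be the partition monoid: its elements are set partitions of $[2n]=\{1,\dots,2n\}$ (points $1,\dots,n$ on top, $n+1,\dots,2n$ on bottom), and the product $I*J$ is obtained by identifying the bottom point $n+i$ of $I$ with the top point $i$ of $J$, joining blocks transitively, and then deleting the identified middle points (formally, with $X=\{x_1,\dots,x_n\}$ disjoint from $[2n]$, $I*J=(I_X\vee J^X)\cap[2n]$, where $I_X$ replaces $n+i$ by $x_i$ in $I$, $J^X$ replaces $i$ by $x_i$ in $J$, and $\vee$ is the join of set partitions). For set partitions, $I\preceq J$ means every block of $J$ is a union of blocks of $I$. The symmetric group $\mathfrak{S}_n$ is the submonoid of $\mathfrak{C}_n$ of partitions whose blocks are of the form $\{i,n+j\}$; $s_i$ denotes the simple transposition and $1$ the identity $\{\{i,n+i\}\}$. For a submonoid $M\subseteq\mathfrak{C}_n$, the ramified monoid $\mathcal{R}(M)$ is the set of pairs $(I,J)$ of set partitions of $[2n]$ with $I\in M$ and $I\preceq J$, with product $(I,J)*(H,K)=(I*H,J*K)$. The group $\mathfrak{S}_n$ embeds via $w\mapsto(w,w)$. For $i\in[n-1]$, $e_i=(1,b_i)$ where $b_i$ is the set partition obtained from $1$ by merging the blocks $\{i,n+i\}$ and $\{i+1,n+i+1\}$.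 Thus $e_1\cdots e_{n-1}=(1,\{[2n]\})$. *)

(* Defs.v *)
From mathcomp Require Import all_boot.
Set Implicit Arguments. Unset Strict Implicit. Unset Printing Implicit Defensive.

(* Points of [2n]: inl i = top point i+1, inr i = bottom point n+i+1 (i : 'I_n). *)
Notation pt n := ('I_n + 'I_n)%type.
(* Points of [2n] ⊔ X, X = {x_1..x_n} encoded as the right summand. *)
Notation gpt n := (pt n + 'I_n)%type.

Definition setpart (n : nat) := {set {set pt n}}.
Definition is_setpart n (P : setpart n) : Prop := partition P [set: pt n].

Definition preceq n (I J : setpart n) : Prop :=
  forall B, B \in J -> exists S : {set {set pt n}}, S \subset I /\ B = cover S.

Definition same n (P : setpart n) (x y : pt n) : bool :=
  [exists B in P, (x \in B) && (y \in B)].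

(* I_X : bottom point n+i of I is renamed x_i. *)
Definition mapI n (p : pt n) : gpt n :=
  match p with inl i => inl (inl i) | inr i => inr i end.
(* J^X : top point i of J is renamed x_i. *)
Definition mapJ n (p : pt n) : gpt n :=
  match p with inl i => inr i | inr i => inl (inr i) end.

(* Union of the block relations of I_X and J^X on [2n] ⊔ X; its
   reflexive-transitive closure (connect) is the join I_X ∨ J^X. *)
Definition join_edge n (I J : setpart n) : rel (gpt n) := fun u v =>
  [exists p, exists q, [&& same I p q, mapI p == u & mapI q == v]] ||
  [exists p, exists q, [&& same J p q, mapJ p == u & mapJ q == v]].

(* I * J = (I_X ∨ J^X) ∩ [2n]. *)
Definition pmul n (I J : setpart n) : setpart n :=
  equivalence_partition
    (fun x y : pt n => connect (join_edge I J) (inl x) (inl y)) [set: pt n].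

Definition pone n : setpart n := [set [set (inl i : pt n); inr i] | i : 'I_n].

Definition inS n (I : setpart n) : Prop :=
  is_setpart I /\ forall B, B \in I -> exists i j : 'I_n, B = [set inl i; inr j].

Definition rmon n := (setpart n * setpart n)%type.
Definition inR n (x : rmon n) : Prop :=
  inS x.1 /\ is_setpart x.2 /\ preceq x.1 x.2.
Definition rmul n (x y : rmon n) : rmon n := (pmul x.1 y.1, pmul x.2 y.2).
Definition rone n : rmon n := (pone n, pone n).

(* b_i (i in [n-1], 1-based): merge blocks {i,n+i} and {i+1,n+i+1} of 1;
   in 0-based indices these are the columns i-1 and i. *)
Definition col_in n (k : nat) (x : pt n) : bool :=
  match x with inl j | inr j => (val j == k.-1) || (val j == k) end.
Definition bpart n (k : nat) : setpart n :=
  [set [set (inl j : pt n); inr j] | j : 'I_n & ~~ col_in k (inl j)]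
  :|: [set [set x : pt n | col_in k x]].
Definition e n (k : nat) : rmon n := (pone n, bpart n k).

Definition eprod n : rmon n := foldr (@rmul n) (rone n) [seq e n k | k <- iota 1 n.-1].

(* Main.v *)
Require Import Defs.
From mathcomp Require Import all_boot all_fingroup.
Set Implicit Arguments. Unset Strict Implicit. Unset Printing Implicit Defensive.

Lemma cov_all n (P : setpart n) x : is_setpart P -> x \in cover P.
Proof. by move=> /and3P[/eqP-> _ _]; rewrite inE. Qed.

Lemma sameE n (P : setpart n) x y : is_setpart P -> same P x y = (y \in pblock P x).
Proof.
move=> hP; have [_ tiP _] := and3P hP.
apply/existsP/idP => [[B /andP[BP /andP[xB yB]]]|yP].
  by rewrite (def_pblock tiP BP xB).
exists (pblock P x); rewrite pblock_mem ?cov_all // yP mem_pblock cov_all //.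
Qed.

Lemma same_refl n (P : setpart n) x : is_setpart P -> same P x x.
Proof. by move=> hP; rewrite sameE // mem_pblock cov_all. Qed.

Lemma same_sym n (P : setpart n) x y : same P x y = same P y x.
Proof. by apply/existsP/existsP => [[B /andP[BP /andP[xB yB]]]|[B /andP[BP /andP[xB yB]]]];
  exists B; rewrite BP xB yB. Qed.

Lemma same_trans n (P : setpart n) x y z : is_setpart P ->
  same P x y -> same P y z -> same P x z.
Proof.
move=> hP; have [_ tiP _] := and3P hP.
rewrite !sameE // => yx zy.
by rewrite -(same_pblock tiP yx).
Qed.

Lemma part_ext n (P Q : setpart n) : is_setpart P -> is_setpart Q ->
  (forall x y, same P x y = same Q x y) -> P = Q.
Proof.
move=> hP hQ hs.
have key : forall (P Q : setpart n), is_setpart P -> is_setpart Q ->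
  (forall x y, same P x y = same Q x y) -> P \subset Q.
  move=> {hP hQ hs} P0 Q0 hP hQ hs; apply/subsetP => B BP.
  have /set0Pn[x xB] : B != set0 by apply: (partition_neq0 hP BP).
  have [_ tiP _] := and3P hP.
  have -> : B = pblock Q0 x.
    rewrite -(def_pblock tiP BP xB); apply/setP => y.
    by rewrite -sameE // hs sameE.
  by rewrite pblock_mem // cov_all.
by apply/eqP; rewrite eqEsubset !key // => x y; rewrite hs.
Qed.

Lemma join_edge_sym n (I J : setpart n) : symmetric (join_edge I J).
Proof.
move=> u v; rewrite /join_edge.
congr orb; apply/existsP/existsP => [] [p /existsP[q /and3P[s /eqP e1 /eqP e2]]];
  exists q; apply/existsP; exists p; rewrite same_sym s e1 e2 !eqxx //.
Qed.

Lemma pmul_part n (I J : setpart n) : is_setpart (pmul I J).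
Proof.
apply: equivalence_partitionP => x y z _ _ _ /=.
split; first exact: connect0.
move=> cxy; apply/idP/idP => [cxz|cyz].
  rewrite (sym_connect_sym (@join_edge_sym n I J)) in cxy.
  exact: connect_trans cxy cxz.
exact: connect_trans cxy cyz.
Qed.

Lemma pmul_same n (I J : setpart n) x y :
  same (pmul I J) x y = connect (join_edge I J) (inl x) (inl y).
Proof.
rewrite sameE ?pmul_part //.
apply: pblock_equivalence_partition; rewrite ?inE //.
move=> a b c _ _ _ /=.
split; first exact: connect0.
move=> cxy; apply/idP/idP => [cxz|cyz].
  rewrite (sym_connect_sym (@join_edge_sym n I J)) in cxy.
  exact: connect_trans cxy cxz.
exact: connect_trans cxy cyz.
exact: pmul_part.
Qed.

Lemma conn_up n (I J P : setpart n) (h : gpt n -> pt n) u v : is_setpart P ->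
  (forall a b, join_edge I J a b -> same P (h a) (h b)) ->
  connect (join_edge I J) u v -> same P (h u) (h v).
Proof.
move=> hP he /connectP[p pp ->]; elim: p u pp => [|w p IH] u /=.
  by move=> _; apply: same_refl.
by case/andP=> e1 pp; apply: same_trans (he _ _ e1) (IH _ pp).
Qed.

Lemma edgeI n (I J : setpart n) p q : same I p q -> join_edge I J (mapI p) (mapI q).
Proof. by move=> s; apply/orP; left; apply/existsP; exists p; apply/existsP; exists q; rewrite s !eqxx. Qed.
Lemma edgeJ n (I J : setpart n) p q : same J p q -> join_edge I J (mapJ p) (mapJ q).
Proof. by move=> s; apply/orP; right; apply/existsP; exists p; apply/existsP; exists q; rewrite s !eqxx. Qed.

Lemma edge_inv n (I J : setpart n) a b : join_edge I J a b ->
  (exists p q, [/\ same I p q, a = mapI p & b = mapI q]) \/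
  (exists p q, [/\ same J p q, a = mapJ p & b = mapJ q]).
Proof.
case/orP => /existsP[p /existsP[q /and3P[s /eqP e1 /eqP e2]]]; [left|right];
  by exists p, q.
Qed.

Definition permp n (s : {perm 'I_n}) : setpart n :=
  [set [set (inl i : pt n); inr (s i)] | i : 'I_n].
Definition kp n (s : {perm 'I_n}) (x : pt n) : 'I_n :=
  match x with inl i => i | inr j => (s^-1)%g j end.

Lemma blkE n (s : {perm 'I_n}) i : [set (inl i : pt n); inr (s i)] = [set x | kp s x == i].
Proof.
apply/setP => x; rewrite !inE; case: x => [a|b] /=.
  by rewrite orbF.
apply/eqP/eqP => [[->]|<-]; first by rewrite permK.
by rewrite permKV.
Qed.

Lemma permp_part n (s : {perm 'I_n}) : is_setpart (permp s).
Proof.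
apply/and3P; split.
- apply/eqP/setP => x; rewrite inE; apply/bigcupP; exists [set (inl (kp s x) : pt n); inr (s (kp s x))].
    by apply: imset_f.
  by rewrite blkE inE.
- apply/trivIsetP => _ _ /imsetP[i _ ->] /imsetP[j _ ->] ne.
  rewrite !blkE; apply/pred0P => z /=; rewrite !inE.
  apply/negP => /andP[/eqP e1 /eqP e2]; move: ne; by rewrite -e1 -e2 eqxx.
- apply/imsetP => [[i _ e0]].
  have : (inl i : pt n) \in [set inl i; inr (s i)] by rewrite !inE eqxx.
  by rewrite -e0 inE.
Qed.

Lemma same_permp n (s : {perm 'I_n}) x y : same (permp s) x y = (kp s x == kp s y).
Proof.
apply/existsP/eqP => [[B /andP[/imsetP[i _ ->]]]|e].
  by rewrite blkE !inE => /andP[/eqP-> /eqP->].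
exists [set (inl (kp s x) : pt n); inr (s (kp s x))]; apply/andP; split.
  by apply: imset_f.
by rewrite blkE !inE e eqxx.
Qed.

Lemma pone_permp n : pone n = permp 1%g.
Proof. by apply: eq_imset => i; rewrite perm1. Qed.

Definition tl n (s : {perm 'I_n}) (x : pt n) : pt n :=
  match x with inl i => inl (s i) | inr j => inr j end.
Definition tr n (s : {perm 'I_n}) (x : pt n) : pt n :=
  match x with inl i => inl i | inr j => inr ((s^-1)%g j) end.

Lemma pmul_permp_l n (s : {perm 'I_n}) (P : setpart n) x y : is_setpart P ->
  same (pmul (permp s) P) x y = same P (tl s x) (tl s y).
Proof.
move=> hP; rewrite pmul_same.
pose h (u : gpt n) : pt n := match u with
  | inl (inl i) => inl (s i) | inl (inr j) => inr j | inr k => inl k end.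
have hx : forall x, h (inl x) = tl s x by case.
apply/idP/idP => [c|sp].
  rewrite -!hx; apply: conn_up c => // a b /edge_inv [[p [q [spq -> ->]]]|[p [q [spq -> ->]]]].
    have hg : forall p, h (mapI p) = inl (s (kp s p)).
      by case => //= j; rewrite permKV.
    rewrite !hg; move: spq; rewrite same_permp => /eqP->; exact: same_refl.
  have hJ : forall p, h (mapJ p) = p by case.
  by rewrite !hJ.
have cu : forall u, connect (join_edge (permp s) P) u (mapJ (h u)).
  case => [[i|j]|k] /=; try exact: connect0.
  apply: connect1; rewrite (_ : inl (inl i) = mapI (inl i)) //.
  rewrite (_ : inr (s i) = mapI (inr (s i))) //; apply: edgeI.
  by rewrite same_permp /= permK.
apply: connect_trans (cu _) _.
rewrite (sym_connect_sym (@join_edge_sym n _ _)).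
apply: (connect_trans (cu (inl y))).
by apply: connect1; apply: edgeJ; rewrite same_sym !hx.
Qed.

Lemma pmul_permp_r n (s : {perm 'I_n}) (P : setpart n) x y : is_setpart P ->
  same (pmul P (permp s)) x y = same P (tr s x) (tr s y).
Proof.
move=> hP; rewrite pmul_same.
pose h (u : gpt n) : pt n := match u with
  | inl (inl i) => inl i | inl (inr j) => inr ((s^-1)%g j) | inr k => inr k end.
have hx : forall x, h (inl x) = tr s x by case.
apply/idP/idP => [c|sp].
  rewrite -!hx; apply: conn_up c => // a b /edge_inv [[p [q [spq -> ->]]]|[p [q [spq -> ->]]]].
    have hI : forall p, h (mapI p) = p by case.
    by rewrite !hI.
  have hg : forall p, h (mapJ p) = inr (kp s p) by case.
  rewrite !hg; move: spq; rewrite same_permp => /eqP->; exact: same_refl.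
have cu : forall u, connect (join_edge P (permp s)) u (mapI (h u)).
  case => [[i|j]|k] /=; try exact: connect0.
  apply: connect1; rewrite (_ : inl (inr j) = mapJ (inr j)) //.
  rewrite (_ : inr ((s^-1)%g j) = mapJ (inl ((s^-1)%g j))) //; apply: edgeJ.
  by rewrite same_permp.
apply: connect_trans (cu _) _.
rewrite (sym_connect_sym (@join_edge_sym n _ _)).
apply: (connect_trans (cu (inl y))).
by apply: connect1; apply: edgeI; rewrite same_sym !hx.
Qed.

Definition Tfull n : setpart n := [set [set: pt n]].

Lemma Tfull_part n : 0 < n -> is_setpart (Tfull n).
Proof.
move=> n0; apply/and3P; split.
- by rewrite /Tfull cover1.
- by apply/trivIsetP => A B; rewrite !inE => /eqP-> /eqP->; rewrite eqxx.
- rewrite inE; apply/eqP => /setP /(_ (inl (Ordinal n0))).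
  by rewrite !inE.
Qed.

Lemma same_Tfull n x y : same (Tfull n) x y.
Proof. by apply/existsP; exists [set: pt n]; rewrite /Tfull !inE eqxx. Qed.

Lemma pone_part n : is_setpart (pone n).
Proof. by rewrite pone_permp; apply: permp_part. Qed.

Lemma pone_l n (P : setpart n) : is_setpart P -> pmul (pone n) P = P.
Proof.
move=> hP; apply: part_ext => //; first exact: pmul_part.
by move=> x y; rewrite pone_permp pmul_permp_l //; case: x; case: y => *; rewrite /= ?perm1.
Qed.

Lemma pone_r n (P : setpart n) : is_setpart P -> pmul P (pone n) = P.
Proof.
move=> hP; apply: part_ext => //; first exact: pmul_part.
by move=> x y; rewrite pone_permp pmul_permp_r //; case: x; case: y => *; rewrite /= ?invg1 ?perm1.
Qed.

Definition balanced n (J : setpart n) :=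
  forall x, (exists a, same J x (inl a)) /\ (exists b, same J x (inr b)).

Lemma pmul_T_l n (J : setpart n) : 0 < n -> is_setpart J -> balanced J ->
  pmul (Tfull n) J = Tfull n.
Proof.
move=> n0 hJ bJ; apply: part_ext; [exact: pmul_part|exact: Tfull_part|].
move=> x y; rewrite same_Tfull pmul_same.
have cu : forall u, exists p, connect (join_edge (Tfull n) J) u (mapI p).
  case => [[i|j]|k]; first by exists (inl i); apply: connect0.
    have [_ [a sa]] := (proj1 (bJ (inr j)), bJ (inr j)).
    case: (proj1 (bJ (inr j))) => a' sa'.
    exists (inr a'); apply: connect1.
    by rewrite (_ : inl (inr j) = mapJ (inr j)) // (_ : mapI (inr a') = mapJ (inl a')) //; apply: edgeJ.
  by exists (inr k); apply: connect0.
have [p cp] := cu (inl x); have [q cq] := cu (inl y).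
apply: connect_trans cp _.
rewrite (sym_connect_sym (@join_edge_sym n _ _)) in cq.
apply: connect_trans _ cq.
by apply: connect1; apply: edgeI; apply: same_Tfull.
Qed.

Lemma pmul_T_r n (J : setpart n) : 0 < n -> is_setpart J -> balanced J ->
  pmul J (Tfull n) = Tfull n.
Proof.
move=> n0 hJ bJ; apply: part_ext; [exact: pmul_part|exact: Tfull_part|].
move=> x y; rewrite same_Tfull pmul_same.
have cu : forall u, exists p, connect (join_edge J (Tfull n)) u (mapJ p).
  case => [[i|j]|k]; last by exists (inl k); apply: connect0.
    case: (proj2 (bJ (inl i))) => b sb.
    exists (inl b); apply: connect1.
    by rewrite (_ : inl (inl i) = mapI (inl i)) // (_ : mapJ (inl b) = mapI (inr b)) //; apply: edgeI.
  by exists (inr j); apply: connect0.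
have [p cp] := cu (inl x); have [q cq] := cu (inl y).
apply: connect_trans cp _.
rewrite (sym_connect_sym (@join_edge_sym n _ _)) in cq.
apply: connect_trans _ cq.
by apply: connect1; apply: edgeJ; apply: same_Tfull.
Qed.

Lemma prec_same n (I J : setpart n) x z : is_setpart I -> is_setpart J -> preceq I J ->
  same I x z -> same J x z.
Proof.
move=> hI hJ pIJ /existsP[C /andP[CI /andP[xC zC]]].
have BJ := pblock_mem (cov_all x hJ).
have [S [SI eB]] := pIJ _ BJ.
have : x \in cover S by rewrite -eB mem_pblock cov_all.
case/bigcupP => C' C'S xC'.
have [_ tiI _] := and3P hI.
have CC' : C' = C.
  by rewrite -(def_pblock tiI CI xC) (def_pblock tiI (subsetP SI _ C'S) xC').
apply/existsP; exists (pblock J x); rewrite BJ mem_pblock cov_all //=.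
by rewrite eB; apply/bigcupP; exists C'; rewrite // CC'.
Qed.

Lemma inS_balanced n (I J : setpart n) : inS I -> is_setpart J -> preceq I J -> balanced J.
Proof.
move=> [hI bI] hJ pIJ x.
have BI := pblock_mem (cov_all x hI).
have [a [b eB]] := bI _ BI.
have xB : x \in pblock I x by rewrite mem_pblock cov_all.
split; [exists a|exists b]; apply: (prec_same hI hJ pIJ);
  apply/existsP; exists (pblock I x); rewrite BI xB /= eB !inE eqxx ?orbT //.
Qed.

Definition Wcol n (P : setpart n) := forall i, same P (inl i) (inr i).

Lemma Wcol_pmul n (I J : setpart n) : Wcol I -> Wcol J -> Wcol (pmul I J).
Proof.
move=> wI wJ i; rewrite pmul_same.
apply: (@connect_trans _ _ (inr i)); apply: connect1.
  by rewrite (_ : inl (inl i) = mapI (inl i)) // (_ : inr i = mapI (inr i)) //; apply: edgeI.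
by rewrite (_ : inl (inr i) = mapJ (inr i)) // (_ : inr i = mapJ (inl i)) //; apply: edgeJ.
Qed.

Lemma crl n (I J : setpart n) i j : same I (inl i) (inl j) -> same (pmul I J) (inl i) (inl j).
Proof.
move=> s; rewrite pmul_same; apply: connect1.
by rewrite (_ : inl (inl i) = mapI (inl i)) // (_ : inl (inl j) = mapI (inl j)) //; apply: edgeI.
Qed.

Lemma crr n (I J : setpart n) i j : Wcol I -> same J (inl i) (inl j) ->
  same (pmul I J) (inl i) (inl j).
Proof.
move=> wI s; rewrite pmul_same.
apply: (@connect_trans _ _ (inr i)); first apply: connect1.
  by rewrite (_ : inl (inl i) = mapI (inl i)) // (_ : inr i = mapI (inr i)) //; apply: edgeI.
apply: (@connect_trans _ _ (inr j)); apply: connect1.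
  by rewrite (_ : inr i = mapJ (inl i)) // (_ : inr j = mapJ (inl j)) //; apply: edgeJ.
rewrite (_ : inl (inl j) = mapI (inl j)) // (_ : inr j = mapI (inr j)) //; apply: edgeI.
by rewrite same_sym.
Qed.

Lemma Wcol_pone n : Wcol (pone n).
Proof.
move=> i; apply/existsP; exists [set (inl i : pt n); inr i].
rewrite !inE !eqxx orbT andbT /=; apply/andP; split=> //; by apply/imsetP; exists i.
Qed.

Lemma Wcol_bpart n k : Wcol (bpart n k).
Proof.
move=> i; apply/existsP; case: (boolP (col_in k (inl i))) => ci.
  exists [set x : pt n | col_in k x]; rewrite !inE ci /=.
  by rewrite eqxx orbT /=; exact: ci.
exists [set (inl i : pt n); inr i]; rewrite !inE !eqxx orbT andbT.
rewrite /= andbT; apply/orP; left; apply/imsetP; exists i; by rewrite // inE.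
Qed.

Lemma bpart_adj n k (a b : 'I_n) : val a = k.-1 -> val b = k ->
  same (bpart n k) (inl a) (inl b).
Proof.
move=> ea eb; apply/existsP; exists [set x : pt n | col_in k x].
by rewrite /bpart !inE /= ea eb !eqxx /= !orbT.
Qed.

Lemma foldr_fst n (l : seq (rmon n)) :
  (foldr (@rmul n) (rone n) l).1 = foldr (@pmul n) (pone n) (map fst l).
Proof. by elim: l => //= a l <-. Qed.
Lemma foldr_snd n (l : seq (rmon n)) :
  (foldr (@rmul n) (rone n) l).2 = foldr (@pmul n) (pone n) (map snd l).
Proof. by elim: l => //= a l <-. Qed.

Lemma Q_props n (l : seq nat) :
  Wcol (foldr (@pmul n) (pone n) [seq bpart n k | k <- l]) /\
  forall k, k \in l -> forall a b : 'I_n, val a = k.-1 -> val b = k ->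
    same (foldr (@pmul n) (pone n) [seq bpart n k | k <- l]) (inl a) (inl b).
Proof.
elim: l => [|k l [IW IS]] /=; first by split=> //; apply: Wcol_pone.
split; first by apply: Wcol_pmul => //; apply: Wcol_bpart.
move=> k'; rewrite inE => /orP[/eqP->|kl] a b ea eb.
  by apply: crl; apply: bpart_adj.
by apply: crr; [apply: Wcol_bpart|apply: (IS k')].
Qed.

Lemma eprodE n : 3 <= n -> eprod n = (pone n, Tfull n).
Proof.
move=> n3; have p1 : 0 < n.-1 by move: n3; case: n => [|[|[|]]].
rewrite /eprod; apply: injective_projections.
  rewrite foldr_fst; elim: (iota 1 n.-1) => //= k l ->.
  by rewrite /e /= pone_l //; apply: pone_part.
rewrite foldr_snd -map_comp.
rewrite (eq_map (_ : snd \o e n =1 bpart n)) //.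
have [W S] := Q_props n (iota 1 n.-1).
set Q := foldr _ _ _ in W S *.
have hQ : is_setpart Q.
  rewrite /Q; case E: n.-1 => [|m] /=; first by rewrite E in p1.
  exact: pmul_part.
have n0 : 0 < n by apply: leq_trans n3.
have h0 : forall i : 'I_n, same Q (inl (Ordinal n0)) (inl i).
  case=> i; elim: i => [|i IH] lt; first by rewrite (_ : Ordinal lt = Ordinal n0) ?(same_refl _ hQ) //; apply: val_inj.
  apply: (same_trans hQ (IH (ltnW lt))).
  apply: (S i.+1) => //; rewrite mem_iota add1n prednK //.
apply: part_ext => //; first exact: Tfull_part.
have hl : forall x, same Q (inl (Ordinal n0)) x.
  case=> i; first exact: h0.
  by apply: same_trans (h0 i) (W i).
move=> x y; rewrite same_Tfull.
by apply: (same_trans hQ _ (hl y)); rewrite same_sym hl.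
Qed.

Lemma inR_perm n (s : {perm 'I_n}) : inR (permp s, permp s).
Proof.
split; last split; rewrite /=; first split.
- exact: permp_part.
- by move=> B /imsetP[i _ ->]; exists i, (s i).
- exact: permp_part.
- by move=> B BP; exists [set B]; rewrite sub1set BP cover1.
Qed.

Lemma pick3 n (i b : 'I_n) : 3 <= n -> exists k : 'I_n, (k != i) && (k != b).
Proof.
move=> n3.
have : 0 < #|~: [set i; b]|.
  have := cardsC [set i; b]; rewrite cards2 card_ord.
  by case: (i != b) => /= e; rewrite -e in n3; case: #|_| n3.
case/card_gt0P => k; rewrite !inE negb_or => kk; by exists k.
Qed.

Lemma noRR n (I : setpart n) a b : inS I -> same I (inr a) (inr b) -> a = b.
Proof.
move=> [_ bI] /existsP[B /andP[BI /andP[aB bB]]].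
have [c [d eB]] := bI _ BI.
by move: aB bB; rewrite eB !inE /= => /eqP[->] /eqP[->].
Qed.

Lemma inS_blk n (I : setpart n) i : inS I -> exists b, same I (inl i) (inr b).
Proof.
move=> [hI bI]; have BI := pblock_mem (cov_all (inl i) hI).
have xB : (inl i : pt n) \in pblock I (inl i) by rewrite mem_pblock cov_all.
have [c [d eB]] := bI _ BI; exists d.
apply/existsP; exists (pblock I (inl i)); rewrite BI xB /= eB !inE eqxx.
by rewrite orbT.
Qed.

Definition col n (x : pt n) : 'I_n := match x with inl i => i | inr i => i end.

Lemma col_pone n x y : same (pone n) x y = (col x == col y).
Proof. by rewrite pone_permp same_permp; case: x; case: y => * /=; rewrite ?invg1 ?perm1. Qed.

Lemma Wcol_same n (P : setpart n) x : is_setpart P -> Wcol P -> same P x (inl (col x)).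
Proof. by move=> hP W; case: x => i /=; [apply: same_refl|rewrite same_sym]. Qed.

Lemma forward n (x : rmon n) : 3 <= n -> inR x ->
  (forall y : rmon n, inR y -> rmul x y = rmul y x) -> x = rone n \/ x = eprod n.
Proof.
case: x => I J n3 [[hI bI] [hJ pIJ]] H.
change (is_setpart I) in hI; change (is_setpart J) in hJ; change (preceq I J) in pIJ.
have sI : inS I by split.
have n0 : 0 < n by apply: leq_trans n3.
have inv : forall s : {perm 'I_n},
  (forall x y, same I (tr s x) (tr s y) = same I (tl s x) (tl s y)) /\
  (forall x y, same J (tr s x) (tr s y) = same J (tl s x) (tl s y)).
  move=> s; have := H _ (inR_perm s); rewrite /rmul => e.
  have e1 : pmul I (permp s) = pmul (permp s) I by exact: (f_equal fst e).
  have e2 : pmul J (permp s) = pmul (permp s) J by exact: (f_equal snd e).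
  split=> x y.
    by rewrite -(pmul_permp_l s x y hI) -(pmul_permp_r s x y hI) e1.
  by rewrite -(pmul_permp_l s x y hJ) -(pmul_permp_r s x y hJ) e2.
have WI : Wcol I.
  move=> i; have [b sb] := inS_blk i sI.
  case: (eqVneq b i) => [eb|nbi]; first by rewrite eb in sb.
  have [k /andP[ki kb]] := pick3 i b n3.
  have [invI _] := inv (tperm b k).
  have := invI (inl i) (inr k).
  rewrite /tr /tl tpermV tpermR sb (tpermD nbi ki) => sk.
  have sbk : same I (inr b) (inr k) by apply: (same_trans hI _ (esym sk)); rewrite same_sym.
  by move: kb; rewrite (noRR sI sbk) eqxx.
have eI : I = pone n.
  apply: part_ext => //; first exact: pone_part.
  move=> x y; rewrite col_pone; apply/idP/eqP => [sxy|exy].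
    have s1 : same I (inl (col x)) (inl (col y)).
      apply: (same_trans hI _ (Wcol_same y hI WI)).
      by apply: (same_trans hI _ sxy); rewrite same_sym Wcol_same.
    apply: (noRR sI); apply: (same_trans hI _ (WI _)).
    by apply: (same_trans hI _ s1); rewrite same_sym WI.
  apply: (same_trans hI (Wcol_same x hI WI)); rewrite exy same_sym.
  exact: Wcol_same.
have WJ : Wcol J by move=> i; apply: (prec_same hI hJ pIJ); apply: WI.
have invJ : forall (s : {perm 'I_n}) i j,
  same J (inl i) (inl j) = same J (inl (s i)) (inl (s j)).
  by move=> s i j; have [_ iJ] := inv s; apply: (iJ (inl i) (inl j)).
have Jto : forall x y, same J (inl (col x)) (inl (col y)) -> same J x y.
  move=> x y s; apply: (same_trans hJ (Wcol_same x hJ WJ)).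
  by apply: (same_trans hJ s); rewrite same_sym Wcol_same.
case: (boolP [exists i, exists j, (i != j) && same J (inl i) (inl j)]).
  case/existsP => i /existsP[j /andP[nij sij]].
  have hi : forall k, same J (inl i) (inl k).
    move=> k; case: (eqVneq k i) => [->|nki]; first exact: same_refl.
    have nji : j != i by rewrite eq_sym.
    by rewrite (invJ (tperm j k)) tpermR (tpermD nji nki).
  right; rewrite eprodE // eI; congr pair.
  apply: part_ext => //; first exact: Tfull_part.
  move=> x y; rewrite same_Tfull; apply: Jto.
  by apply: (same_trans hJ _ (hi _)); rewrite same_sym.
move=> nex; left; rewrite /rone eI; congr pair.
apply: part_ext => //; first exact: pone_part.
move=> x y; rewrite col_pone; apply/idP/eqP => [sxy|exy].
  apply/eqP; apply: contraNT nex => ne; apply/existsP; exists (col x); apply/existsP; exists (col y).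
  rewrite ne /=; apply: (same_trans hJ _ (Wcol_same y hJ WJ)).
  by apply: (same_trans hJ _ sxy); rewrite same_sym Wcol_same.
by apply: Jto; rewrite exy; apply: same_refl.
Qed.

Theorem proposition3p4 (n : nat) : 3 <= n ->
  forall x : rmon n, inR x ->
    ((forall y : rmon n, inR y -> rmul x y = rmul y x) <->
     (x = rone n \/ x = eprod n)).
Proof.
move=> n3 x hx; split; first exact: forward.
have n0 : 0 < n by apply: leq_trans n3.
move=> ex [y1 y2] [[hy1 by1] [hy2 py]].
change (is_setpart y1) in hy1; change (is_setpart y2) in hy2; change (preceq y1 y2) in py.
case: ex => ->; last rewrite eprodE //; rewrite /rmul; congr pair.
- by rewrite pone_l // pone_r.
- by rewrite pone_l // pone_r.
- by rewrite pone_l // pone_r.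
- have bal := inS_balanced (conj hy1 by1) hy2 py.
  by rewrite pmul_T_l // pmul_T_r.
Qed.
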